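(* Let $I\subseteq\mathfrak{M}$ be an ideal, let $Z=\{z_1,\dots,z_s\}$ be a set of distinct indeterminates in $X$, let $\sigma$ be a $Z$-separating term ordering for $I$, and let $\{\frac1{c_1}f_1,\dots,\frac1{c_s}f_s,g_1,\dots,g_t\}$ be a $Z$-separating $\sigma$-Gröbner basis of $I$ (with $(f_1,\dots,f_s)$ coherently $Z$-separating, $c_i=\mathrm{LC}_\sigma(f_i)$, $z_i=\mathrm{LT}_\sigma(f_i)$, and $\{g_1,\dots,g_t\}$ the reduced $\hat\sigma$-Gröbner basis of $I\cap\widehat P$). Write $X\setminus Z=\{y_1,\dots,y_{n-s}\}$. (a) Let $\varphi:P\to\widehat P$ be the $K$-algebra homomorphism with $\varphi(x_i)=x_i$ if $x_i\notin Z$ and $\varphi(x_i)=\mathrm{tail}_{z_j}(f_j)$ if $x_i=z_j$. Then $\varphi$ induces a $K$-algebra isomorphism $\Phi:P/I\to\widehat P/(I\cap\widehat P)$, $\Phi(x_i+I)=\varphi(x_i)+(I\cap\widehat P)$. (b) The inverse $\Phi^{-1}$ is given by $y_i+(I\cap\widehat P)\mapsto y_i+I$ for $i=1,\dots,n-s$. (c) $\Phi$ and $\Phi^{-1}$ do not depend on the choice of the $Z$-separating $\sigma$-Gröbner basis of $I$; in particular they may be defined using the reduced $\sigma$-Gröbner basis of $I$.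
   Context: $K$ is a field, $P=K[x_1,\dots,x_n]$, $X=\{x_1,\dots,x_n\}$, $\mathfrak{M}=\langle x_1,\dots,x_n\rangle$, $\widehat P=K[X\setminus Z]$, $\hat\sigma$ the restriction of $\sigma$ to $\widehat P$. For $f\in P$, $\mathrm{indets}(f)$ is the set of indeterminates dividing some term in the support of $f$. For $f\in\mathfrak{M}$ with nonzero degree-one part $\mathrm{Lin}_{\mathfrak{M}}(f)$, $z\in\mathrm{indets}(\mathrm{Lin}_{\mathfrak M}(f))$, and $c\neq 0$ the coefficient of $z$ in $f$, set $\mathrm{tail}_z(f)=z-\frac1cf$; $f$ is $z$-separating if $z\notin\mathrm{indets}(\mathrm{tail}_z(f))$. A tuple $(f_1,\dots,f_s)$ of nonzero elements of $\mathfrak M$ is coherently $Z$-separating if each $f_i$ is $z_i$-separating and $z_i\notin\mathrm{indets}(f_j)$ for $j\ne i$. A term ordering $\sigma$ is a $Z$-separating term ordering for $I$ if there are $f_1,\dots,f_s\in I\setminus\{0\}$ with $z_i=\mathrm{LT}_\sigma(f_i)$ and $(f_1,\dots,f_s)$ coherently $Z$-separating. For such $\sigma$, a $Z$-separating $\sigma$-Gröbner basis of $I$ is a $\sigma$-Gröbner basis of the form $\{\frac1{c_1}f_1,\dots,\frac1{c_s}f_s,g_1,\dots,g_t\}$ with $(f_1,\dots,f_s)$ coherently $Z$-separating, $c_i=\mathrm{LC}_\sigma(f_i)$, $z_i=\mathrm{LT}_\sigma(f_i)$, and $\{g_1,\dots,g_t\}$ the reduced $\hat\sigma$-Gröbner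 basis of $I\cap\widehat P$. *)

(* Defs.v *)
From HB Require Import structures.
From mathcomp Require Import all_boot all_order all_algebra.
From mathcomp Require Import mpoly.
Set Implicit Arguments. Unset Strict Implicit. Unset Printing Implicit Defensive.
Import GRing.Theory.
Local Open Scope ring_scope.

Section GroebnerDefs.
Variables (K : fieldType) (n : nat).
Local Notation P := {mpoly K[n]}.
Local Notation mono := 'X_{1..n}.

Definition term_ordering (le : rel mono) : Prop :=
  [/\ reflexive le, antisymmetric le, transitive le & total le] /\
  (forall m : mono, le 0%MM m) /\
  (forall m1 m2 m : mono, le m1 m2 -> le (m1 + m)%MM (m2 + m)%MM).

Definition LT (le : rel mono) (f : P) : mono :=
  foldr (fun m acc => if le acc m then m else acc) 0%MM (msupp f).
Definition LC (le : rel mono) (f : P) : K := f@_(LT le f).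

Definition is_ideal (I : P -> Prop) : Prop :=
  [/\ I 0, (forall a b, I a -> I b -> I (a + b)) &
      (forall a b, I b -> I (a * b))].

(* The maximal ideal M = <x_1,...,x_n>: zero constant coefficient. *)
Definition in_M (f : P) : Prop := f@_0%MM = 0.

Definition indets (f : P) : pred 'I_n :=
  fun i => has (fun m : mono => 0 < m i)%N (msupp f).

(* Coefficient of the indeterminate x_i in f (i.e. in Lin_M(f)). *)
Definition lin_coef (i : 'I_n) (f : P) : K := f@_(U_(i))%MM.

Definition tail (i : 'I_n) (f : P) : P := 'X_i - (lin_coef i f)^-1 *: f.

(* f is x_i-separating (this includes f in M and x_i in indets(Lin_M f)). *)
Definition separating (i : 'I_n) (f : P) : Prop :=
  [/\ in_M f, lin_coef i f != 0 & ~~ indets (tail i f) i].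

Section WithZ.
Variables (s : nat) (z : 'I_s -> 'I_n).

(* membership in hat P = K[X \ Z] *)
Definition in_Phat (f : P) : Prop := forall j : 'I_s, ~~ indets f (z j).

Definition coh_separating (f : 'I_s -> P) : Prop :=
  forall i : 'I_s, [/\ f i != 0, in_M (f i), separating (z i) (f i) &
    forall j : 'I_s, j != i -> ~~ indets (f j) (z i)].

(* sigma-Groebner basis of an ideal J (G subset J and LT(J) = <LT(G)>) *)
Definition groebner (le : rel mono) (J : P -> Prop) (G : seq P) : Prop :=
  (forall g, g \in G -> J g) /\
  (forall h, J h -> h != 0 ->
     exists2 g, g \in G & (g != 0) && lem (LT le g) (LT le h)).

(* reduced sigma-Groebner basis: monic, leading terms form a minimal system
   of generators of LT(J), and no non-leading term of an element lies in LT(J). *)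
Definition reduced_groebner (le : rel mono) (J : P -> Prop) (G : seq P) : Prop :=
  groebner le J G /\
  (forall g, g \in G ->
    [/\ LC le g = 1,
        (forall g', g' \in G -> g' != g -> ~~ lem (LT le g') (LT le g)) &
        (forall m, m \in msupp g -> m != LT le g ->
           forall g', g' \in G -> ~~ lem (LT le g') m)]).

Definition Zsep_term_ordering (le : rel mono) (I : P -> Prop) : Prop :=
  exists f : 'I_s -> P,
    (forall i, [/\ I (f i), f i != 0 & LT le (f i) = U_(z i)%MM]) /\
    coh_separating f.

(* {f_1/c_1,...,f_s/c_s, g_1,...,g_t} is a Z-separating sigma-Groebner basis
   of I; the g_j form the reduced hat-sigma-Groebner basis of I cap hat P
   (hat sigma = restriction of le to the terms of hat P). *)
Definition Zsep_groebner (le : rel mono) (I : P -> Prop)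
    (f : 'I_s -> P) (g : seq P) : Prop :=
  [/\ coh_separating f,
      (forall i, LT le (f i) = U_(z i)%MM),
      reduced_groebner le (fun p => I p /\ in_Phat p) g &
      groebner le I ([seq (LC le (f i))^-1 *: f i | i <- enum 'I_s] ++ g)].

Definition phi_images (f : 'I_s -> P) : n.-tuple P :=
  [tuple match [pick j | z j == i] with
         | Some j => tail (z j) (f j)
         | None => 'X_i
         end | i < n].

Definition phi (f : 'I_s -> P) (p : P) : P := p \mPo phi_images f.

End WithZ.
End GroebnerDefs.

(* Main.v *)
Require Import Defs.
From HB Require Import structures.
From mathcomp Require Import all_boot all_order all_algebra.
From mathcomp Require Import mpoly.
From mathcomp Require Import ring.
Import GRing.Theory.
Local Open Scope ring_scope.
Set Implicit Arguments. Unset Strict Implicit.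

Section Helpers.
Variables (K : fieldType) (n : nat).
Implicit Types (p q : {mpoly K[n]}).

Lemma nv_sub (i : 'I_n) p (s : seq 'X_{1..n}) :
  {subset msupp p <= s} -> ~~ has (fun m : 'X_{1..n} => 0 < m i)%N s -> ~~ indets p i.
Proof. move=> sub; apply: contra => /hasP [m /sub mq hm]; apply/hasP; by exists m. Qed.

Lemma nv0 i : ~~ indets (0 : {mpoly K[n]}) i.
Proof. by rewrite /indets msupp0. Qed.

Lemma nv1 i : ~~ indets (1 : {mpoly K[n]}) i.
Proof. by rewrite /indets msupp1 /= mnm0E ltnn. Qed.

Lemma nvD i p q : ~~ indets p i -> ~~ indets q i -> ~~ indets (p + q) i.
Proof.
move=> hp hq; apply: (@nv_sub i (p + q) _ (@msuppD_le _ _ p q)).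
by rewrite has_cat negb_or hp hq.
Qed.

Lemma nvZ i c p : ~~ indets p i -> ~~ indets (c *: p) i.
Proof. move=> hp; exact: (@nv_sub i (c *: p) _ (@msuppZ_le _ _ c p)). Qed.

Lemma nvB i p q : ~~ indets p i -> ~~ indets q i -> ~~ indets (p - q) i.
Proof. move=> hp hq; apply: nvD => //; rewrite -scaleN1r; exact: nvZ. Qed.

Lemma nvM i p q : ~~ indets p i -> ~~ indets q i -> ~~ indets (p * q) i.
Proof.
move=> hp hq; apply/negP => /hasP [m /msuppM_le /allpairsP [[m1 m2] /= [h1 h2 ->]]].
rewrite mnmDE addn_gt0 => /orP [] h.
- by move/negP: hp; apply; apply/hasP; exists m1.
- by move/negP: hq; apply; apply/hasP; exists m2.
Qed.

Lemma nvX i p k : ~~ indets p i -> ~~ indets (p ^+ k) i.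
Proof. by move=> hp; elim: k => [|k ih]; rewrite ?expr0 ?nv1 // exprS nvM. Qed.

Lemma nv_sum i (T : Type) (r : seq T) (F : T -> {mpoly K[n]}) :
  (forall x, ~~ indets (F x) i) -> ~~ indets (\sum_(x <- r) F x) i.
Proof. by move=> h; apply: (big_ind (fun p => ~~ indets p i)) => //; [exact: nv0 | exact: nvD]. Qed.

Lemma nv_prod i (F : 'I_n -> {mpoly K[n]}) :
  (forall x, ~~ indets (F x) i) -> ~~ indets (\prod_(x < n) F x) i.
Proof. by move=> h; apply: (big_ind (fun p => ~~ indets p i)) => //; [exact: nv1 | exact: nvM]. Qed.

Lemma nv_comp i p (t : n.-tuple {mpoly K[n]}) :
  (forall k, ~~ indets (tnth t k) i) -> ~~ indets (p \mPo t) i.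
Proof.
move=> h; rewrite comp_mpolyEX; apply: nv_sum => m; apply: nvZ.
by rewrite comp_mpolyX; apply: nv_prod => k; apply: nvX.
Qed.

Lemma comp_id_on p (t : n.-tuple {mpoly K[n]}) :
  (forall m i, m \in msupp p -> (0 < m i)%N -> tnth t i = 'X_i) -> p \mPo t = p.
Proof.
move=> h; rewrite comp_mpolyEX [RHS]mpolyE; apply: eq_big_seq => m hm.
congr (_ *: _); rewrite comp_mpolyX mpolyXE_id; apply: eq_bigr => i _.
case: (posnP (m i)) => [->|hi]; first by rewrite !expr0.
by rewrite (h m i hm hi).
Qed.

Section Cong.
Variable I : {mpoly K[n]} -> Prop.
Hypothesis hI : is_ideal I.
Lemma I0 : I 0. Proof. by case: hI. Qed.
Lemma Iadd a b : I a -> I b -> I (a + b). Proof. by case: hI => _ h _; apply: h. Qed.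
Lemma Imul a b : I b -> I (a * b). Proof. by case: hI => _ _ h; apply: h. Qed.
Lemma Iopp a : I a -> I (- a). Proof. move=> h; rewrite -mulN1r; exact: Imul. Qed.
Lemma Isub a b : I a -> I b -> I (a - b). Proof. move=> ha hb; exact: (Iadd ha (Iopp hb)). Qed.
Lemma Iscale c a : I a -> I (c *: a). Proof. move=> h; rewrite -mul_mpolyC; exact: Imul. Qed.
Definition cg a b := I (a - b).
Lemma cgR a : cg a a. Proof. by rewrite /cg subrr; exact: I0. Qed.
Lemma cgD a1 b1 a2 b2 : cg a1 b1 -> cg a2 b2 -> cg (a1 + a2) (b1 + b2).
Proof.
rewrite /cg => h1 h2.
have -> : a1 + a2 - (b1 + b2) = (a1 - b1) + (a2 - b2) by ring.
exact: Iadd.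
Qed.
Lemma cgM a1 b1 a2 b2 : cg a1 b1 -> cg a2 b2 -> cg (a1 * a2) (b1 * b2).
Proof.
rewrite /cg => h1 h2.
have -> : a1 * a2 - (b1 * b2) = a2 * (a1 - b1) + b1 * (a2 - b2) by ring.
by apply: Iadd; apply: Imul.
Qed.
Lemma cgZ c a b : cg a b -> cg (c *: a) (c *: b).
Proof. by rewrite /cg -scalerBr; apply: Iscale. Qed.
Lemma cgX a b k : cg a b -> cg (a ^+ k) (b ^+ k).
Proof. move=> h; elim: k => [|k ih]; first by rewrite !expr0; exact: cgR. by rewrite !exprS; apply: cgM. Qed.

Lemma cg_comp p (t : n.-tuple {mpoly K[n]}) :
  (forall i, cg 'X_i (tnth t i)) -> cg p (p \mPo t).
Proof.
move=> h; rewrite comp_mpolyEX {1}[p]mpolyE.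
apply: (big_ind2 cg); [exact: cgR | exact: cgD |] => m _.
apply: cgZ; rewrite comp_mpolyX {1}mpolyXE_id.
apply: (big_ind2 cg); [exact: cgR | exact: cgM |] => i _.
exact: cgX.
Qed.
End Cong.
End Helpers.
Section P2.
Variables (K : fieldType) (n s : nat) (z : 'I_s -> 'I_n) (le : rel 'X_{1..n}).
Implicit Types (p q : {mpoly K[n]}).

Lemma phi_cong (I : {mpoly K[n]} -> Prop) (hI : is_ideal I) (f : 'I_s -> {mpoly K[n]}) :
  (forall j, I ((LC le (f j))^-1 *: f j)) -> (forall j, LT le (f j) = U_(z j)%MM) ->
  forall p, I (p - phi z f p).
Proof.
move=> hf hLT p; apply: (cg_comp hI) => i; rewrite /cg tnth_mktuple.
case: pickP => [j /eqP <- | _]; last by rewrite subrr; exact: I0.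
have := hf j; rewrite /LC hLT /tail /lin_coef => h.
by rewrite opprB addrC subrK.
Qed.

Lemma phi_nv (f : 'I_s -> {mpoly K[n]}) : injective z -> coh_separating z f ->
  forall p k, ~~ indets (phi z f p) (z k).
Proof.
move=> hz hcoh p k; apply: nv_comp => i; rewrite tnth_mktuple.
case: pickP => [j /eqP hj | hn].
- case: (eqVneq j k) => [<-|hjk].
  + by have [_ _ [_ _ ?] _] := hcoh j.
  + rewrite /tail; apply: nvB.
    * by rewrite /indets msuppX /= mnm1E (inj_eq hz) (negbTE hjk) orbF.
    * apply: nvZ; have [_ _ _ H] := hcoh k; exact: H j hjk.
- by rewrite /indets msuppX /= mnm1E eq_sym hn orbF.
Qed.

Lemma phi_id (f : 'I_s -> {mpoly K[n]}) q : in_Phat z q -> phi z f q = q.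
Proof.
move=> hq; apply: comp_id_on => m i hm hi; rewrite tnth_mktuple.
case: pickP => [j /eqP hj | //]; exfalso.
by move/negP: (hq j); apply; apply/hasP; exists m => //; rewrite hj.
Qed.

Lemma LT_in (h0 : forall m, le 0%MM m) p : p != 0 -> LT le p \in msupp p.
Proof.
rewrite -msupp_eq0 /LT; elim: (msupp p) => [//|x r ih] _ /=.
case: r ih => [|y r'] ih /=; first by rewrite h0 inE.
have := ih isT; set acc := foldr _ _ _ => hacc.
by case: ifP => _; rewrite inE ?eqxx // hacc orbT.
Qed.

Lemma lem_U_cases (m : 'X_{1..n}) i : lem m U_(i)%MM -> m = 0%MM \/ m = U_(i)%MM.
Proof.
move/mnm_lepP => h; case: (posnP (m i)) => hi; [left|right]; apply/mnmP => k;
  rewrite ?mnm0E ?mnm1E; have := h k; rewrite mnm1E; case: eqP => [<-|_] /=.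
- by rewrite hi.
- by rewrite leqn0 => /eqP.
- by move=> h1; apply/eqP; rewrite eqn_leq h1.
- by rewrite leqn0 => /eqP.
Qed.

End P2.
Lemma red_part (K : fieldType) (n s : nat) (I : {mpoly K[n]} -> Prop)
    (z : 'I_s -> 'I_n) (le : rel 'X_{1..n}) :
  (forall p, I p -> in_M p) -> injective z -> (forall m, le 0%MM m) ->
  Zsep_term_ordering z le I ->
  forall G : seq {mpoly K[n]}, reduced_groebner le I G ->
      exists (f' : 'I_s -> {mpoly K[n]}) (g' : seq {mpoly K[n]}),
        Zsep_groebner z le I f' g' /\
        G =i [seq (LC le (f' i))^-1 *: f' i | i <- enum 'I_s] ++ g'.
Proof.
move=> hM hz hle0 [F [hF _]] G [[hGI hGlt] hGr].
have hex : forall j, has (fun x => LT le x == U_(z j)%MM) G.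
  move=> j; have [hFI hF0 hFLT] := hF j.
  have [x xG /andP [x0 hlem]] := hGlt _ hFI hF0.
  rewrite hFLT in hlem; case: (lem_U_cases hlem) => hx.
    exfalso; have [hLC _ _] := hGr x xG; have := hM x (hGI x xG).
    by rewrite /in_M; move: hLC; rewrite /LC hx => -> /eqP; rewrite oner_eq0.
  by apply/hasP; exists x => //; rewrite hx.
pose f' j := nth 0 G (find (fun x => LT le x == U_(z j)%MM) G).
have hf'G j : f' j \in G by rewrite mem_nth // -has_find.
have hf'LT j : LT le (f' j) = U_(z j)%MM by apply/eqP; exact: (nth_find 0 (hex j)).
have hf'LC j : LC le (f' j) = 1 by have [] := hGr _ (hf'G j).
have hf'U j : (f' j)@_(U_(z j)%MM) = 1 by rewrite -(hf'LC j) /LC hf'LT.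
have uniqZ x j : x \in G -> LT le x = U_(z j)%MM -> x = f' j.
  move=> xG hx; case: (eqVneq (f' j) x) => [-> // | hne]; exfalso.
  have [_ hmin _] := hGr x xG.
  by move/negP: (hmin _ (hf'G j) hne); apply; rewrite hf'LT hx; exact: lepm_refl.
have nonlead x m j : x \in G -> m \in msupp x -> m != LT le x -> (0 < m (z j))%N -> False.
  move=> xG hm hmL hpos; have [_ _ hnl] := hGr x xG.
  by move/negP: (hnl m hm hmL _ (hf'G j)); apply; rewrite hf'LT lep1mP -lt0n.
pose isZ (x : {mpoly K[n]}) := [exists j, LT le x == U_(z j)%MM].
pose g' := [seq x : {mpoly K[n]} <- G | ~~ isZ x].
have hg'P x : x \in g' -> in_Phat z x.
  rewrite mem_filter => /andP [nZ xG] j; apply/hasP => [[m hm hpos]].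
  case: (eqVneq m (LT le x)) => [hmL|hmL]; last exact: nonlead x m j xG hm hmL hpos.
  have [_ hmin _] := hGr x xG.
  have hne : f' j != x.
    apply/eqP => hfx; move/negP: nZ; apply; apply/existsP; exists j.
    by rewrite -hfx hf'LT.
  by move/negP: (hmin _ (hf'G j) hne); apply; rewrite hf'LT lep1mP -lt0n -hmL.
have hscal : [seq (LC le (f' i))^-1 *: f' i | i <- enum 'I_s] = [seq f' i | i <- enum 'I_s].
  by apply: eq_map => i; rewrite hf'LC invr1 scale1r.
have hGeq : G =i [seq f' i | i <- enum 'I_s] ++ g'.
  move=> x; rewrite mem_cat mem_filter; apply/idP/idP.
    move=> xG; case hZ: (isZ x); last by rewrite xG orbT.
    move/existsP: hZ => [j /eqP hj]; rewrite (uniqZ x j xG hj).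
    by rewrite map_f ?mem_enum.
  by case/orP => [/mapP [j _ ->] | /andP [_ ->]].
exists f', g'; split; last by rewrite hscal.
split => //.
- move=> i; split.
  + apply/eqP => h0; have := hf'LC i; rewrite h0 /LC mcoeff0 => /eqP.
    by rewrite eq_sym oner_eq0.
  + exact: hM _ (hGI _ (hf'G i)).
  + split; first exact: hM _ (hGI _ (hf'G i)).
      by rewrite /lin_coef hf'U oner_neq0.
    rewrite /tail /lin_coef hf'U invr1 scale1r.
    apply/hasP => [[m hm hpos]].
    case: (eqVneq m U_(z i)%MM) => [hmU|hmU].
      by move: hm; rewrite mcoeff_msupp mcoeffB mcoeffX hmU eqxx hf'U subrr eqxx.
    move: (msuppB_le hm); rewrite mem_cat msuppX inE (negbTE hmU) /= => hmf.
    by apply: (nonlead _ m i (hf'G i) hmf) => //; rewrite hf'LT.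
  + move=> j hji; apply/hasP => [[m hm hpos]].
    case: (eqVneq m (LT le (f' j))) => [hmL|hmL]; last exact: nonlead _ m i (hf'G j) hm hmL hpos.
    by move: hpos; rewrite hmL hf'LT mnm1E (inj_eq hz) (negbTE hji).
- split.
  + split.
    * move=> x hx; split; last exact: hg'P.
      by apply: hGI; move: hx; rewrite mem_filter => /andP [].
    * move=> h [hIh hPh] h0; have [x xG /andP [x0 hl]] := hGlt h hIh h0.
      exists x; last by rewrite x0.
      rewrite mem_filter xG andbT; apply/negP => /existsP [j /eqP hj].
      move: hl; rewrite hj lep1mP => hp.
      by move/negP: (hPh j); apply; apply/hasP; exists (LT le h) => //; [exact: LT_in | rewrite lt0n].
  + move=> x; rewrite mem_filter => /andP [_ xG]; have [h1 h2 h3] := hGr x xG.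
    split => //.
    * by move=> y; rewrite mem_filter => /andP [_ yG]; exact: h2.
    * by move=> m hm hmL y; rewrite mem_filter => /andP [_ yG]; exact: h3.
- split; rewrite hscal.
  + by move=> x; rewrite -hGeq; exact: hGI.
  + move=> h hIh h0; have [x xG hx] := hGlt h hIh h0.
    by exists x => //; rewrite -hGeq.
Qed.

Theorem theorem2p13 (K : fieldType) (n s : nat) (I : {mpoly K[n]} -> Prop)
    (z : 'I_s -> 'I_n) (le : rel 'X_{1..n})
    (f : 'I_s -> {mpoly K[n]}) (g : seq {mpoly K[n]}) :
  is_ideal I -> (forall p, I p -> in_M p) ->
  injective z ->
  term_ordering le ->
  Zsep_term_ordering z le I ->
  Zsep_groebner z le I f g ->
  [/\
   (* (a) phi maps P into hat P and induces an isomorphism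
          P/I -> hat P/(I cap hat P): well defined and injective ... *)
   (forall p, in_Phat z (phi z f p)) /\
   (forall p, I p <-> (I (phi z f p) /\ in_Phat z (phi z f p))) /\
   (* ... and surjective *)
   (forall q, in_Phat z q -> exists p, I (phi z f p - q)),
   (* (b) the inverse is induced by the inclusion hat P -> P, y_i |-> y_i *)
   (forall q, in_Phat z q -> I (phi z f q - q)) /\
   (forall p, I (p - phi z f p)),
   (* (c) independence of the Z-separating sigma-Groebner basis ... *)
   (forall (f' : 'I_s -> {mpoly K[n]}) (g' : seq {mpoly K[n]}),
      Zsep_groebner z le I f' g' ->
      forall p, I (phi z f' p - phi z f p) /\ in_Phat z (phi z f' p - phi z f p)) &
   (* ... and the reduced sigma-Groebner basis of I is Z-separating *)
   (forall G : seq {mpoly K[n]}, reduced_groebner le I G ->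
      exists (f' : 'I_s -> {mpoly K[n]}) (g' : seq {mpoly K[n]}),
        Zsep_groebner z le I f' g' /\
        G =i [seq (LC le (f' i))^-1 *: f' i | i <- enum 'I_s] ++ g')].
Proof.
move=> hI hM hz hto hZ hzg.
have hle0 : forall m, le 0%MM m by case: hto => _ [].
have key : forall f0 g0, Zsep_groebner z le I f0 g0 ->
    (forall p, I (p - phi z f0 p)) /\ (forall p k, ~~ indets (phi z f0 p) (z k)).
  move=> f0 g0 [hc hlt _ [hmem _]]; split.
    apply: (phi_cong hI) hlt => j; apply: hmem.
    by rewrite mem_cat; apply/orP; left; apply: (map_f (fun i => (LC le (f0 i))^-1 *: f0 i)); rewrite mem_enum.
  exact: phi_nv hz hc.
have [hc1 hnv] := key f g hzg.
split.
- split; first exact: hnv.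
  split.
  + move=> p; split.
    * move=> hp; split; last exact: hnv.
      have -> : phi z f p = p - (p - phi z f p) by rewrite opprB addrC subrK.
      exact: (Isub hI hp (hc1 p)).
    * move=> [hp _]; have -> : p = phi z f p + (p - phi z f p) by rewrite addrC subrK.
      exact: (Iadd hI hp (hc1 p)).
  + move=> q hq; exists q; rewrite phi_id // subrr; exact: (I0 hI).
- split; last exact: hc1.
  by move=> q hq; rewrite phi_id // subrr; exact: (I0 hI).
- move=> f' g' h' p; have [hc1' hnv'] := key f' g' h'; split.
    have -> : phi z f' p - phi z f p = (p - phi z f p) - (p - phi z f' p) by ring.
    exact: (Isub hI (hc1 p) (hc1' p)).
  by move=> k; apply: nvB.
- exact: red_part.
Qed.
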